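(* Let $\Gamma$ be a Deza graph with parameters $(n,k,k-1,a)$, $k>1$, $\beta=1$. For any $NA$-vertex $x$, the vertex $x'$ is an $NA$-vertex.
   Context: A Deza graph with parameters $(n,k,b,a)$, $a\le b$, is a $k$-regular graph on $n$ vertices in which any two distinct vertices have $a$ or $b$ common neighbours; $\beta$ is the number of vertices $u\ne v$ with exactly $b$ common neighbours with a given vertex $v$. Since $\beta=1$, for each vertex $x$ let $x_b$ denote the unique vertex having $b=k-1$ common neighbours with $x$. A vertex $x$ is an $A$-vertex if $x$ is adjacent to $x_b$, and an $NA$-vertex otherwise. For an $NA$-vertex $x$, $x'$ denotes the unique neighbour of $x$ not adjacent to $x_b$. *)

(* Defs.v *)
From mathcomp Require Import all_boot.
Set Implicit Arguments. Unset Strict Implicit. Unset Printing Implicit Defensive.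

Definition simple_graph (T : finType) (e : rel T) : Prop :=
  symmetric e /\ irreflexive e.

Definition common (T : finType) (e : rel T) (x y : T) : nat :=
  #|[set z | e x z && e y z]|.

Definition deza_graph (T : finType) (e : rel T) (n k b a : nat) : Prop :=
  [/\ simple_graph e, #|T| = n, a <= b,
      forall x : T, #|[set y | e x y]| = k &
      forall x y : T, x != y -> common e x y = a \/ common e x y = b].

Definition beta (T : finType) (e : rel T) (b : nat) (v : T) : nat :=
  #|[set u | (u != v) && (common e u v == b)]|.

(* x_b : the (unique, when beta = 1) vertex with b common neighbours with x *)
Definition xb (T : finType) (e : rel T) (b : nat) (x : T) : T :=
  odflt x [pick y | (y != x) && (common e x y == b)].

Definition A_vertex (T : finType) (e : rel T) (b : nat) (x : T) : bool :=
  e x (xb e b x).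

Definition NA_vertex (T : finType) (e : rel T) (b : nat) (x : T) : bool :=
  ~~ A_vertex e b x.

(* Main.v *)
Require Import Defs.
From mathcomp Require Import all_boot.
From mathcomp Require Import zify.
Set Implicit Arguments. Unset Strict Implicit. Unset Printing Implicit Defensive.

Lemma commonC (T : finType) (e : rel T) x y :
  symmetric e -> common e x y = common e y x.
Proof.
move=> sym; rewrite /common; apply: eq_card => u; rewrite !inE andbC.
by [].
Qed.

Lemma keyG (T : finType) (e : rel T) k w v p :
  #|[set y | e w y]| = k -> common e w v = k - 1 ->
  e w p -> ~~ e v p -> forall u, e w u -> u != p -> e v u.
Proof.
move=> degw cwv ewp nevp u ewu nup.
set A := [set z | e w z && e v z].
set B := [set z | e w z] :\ p.
have sub : A \subset B.
  apply/subsetP=> z; rewrite !inE => /andP[-> evz]; rewrite andbT.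
  by apply/negP=> /eqP zp; move: evz; rewrite zp (negbTE nevp).
have cB : #|B| = k - 1.
  have := cardsD1 p [set y | e w y]; rewrite degw inE ewp /= -/B; lia.
have cA : #|A| = k - 1 by [].
have AB : A = B by apply/eqP; rewrite eqEcard sub cB cA leqnn.
have : u \in B by rewrite !inE nup ewu.
by rewrite -AB inE => /andP[].
Qed.

Lemma xb_spec (T : finType) (e : rel T) (b : nat) (x : T) :
  beta e b x = 1 -> symmetric e -> xb e b x != x /\ common e x (xb e b x) = b.
Proof.
move=> hb sym; rewrite /xb; case: pickP => [y /andP[yx /eqP c]|none] //=.
exfalso; move: hb; rewrite /beta.
have -> : [set u | (u != x) && (common e u x == b)] = set0.
  apply/setP=> u; rewrite !inE commonC //; exact: none.
by rewrite cards0.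
Qed.

Theorem lemma9 (T : finType) (e : rel T) (n k a : nat) :
  deza_graph e n k (k - 1) a -> 1 < k ->
  (forall v : T, beta e (k - 1) v = 1) ->
  forall x x' : T, NA_vertex e (k - 1) x ->
  (* x' is a (by the paper: the unique) neighbour of x not adjacent to x_b *)
  e x x' -> ~~ e x' (xb e (k - 1) x) ->
  NA_vertex e (k - 1) x'.
Proof.
case=> [[sym irr] _ _ deg _] hk hbeta x x' nax exx' nex'y.
rewrite /NA_vertex /A_vertex in nax *.
set y := xb e (k - 1) x in nax nex'y.
set z := xb e (k - 1) x'.
have [yx cxy] := xb_spec (hbeta x) sym; rewrite -/y in yx cxy.
have [zx' cx'z] := xb_spec (hbeta x') sym; rewrite -/z in zx' cx'z.
apply/negP=> ex'z.
have irr' : forall u, e u u = false by move=> u; exact: irr.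
have nzz : ~~ e z z by rewrite irr'.
have HL := keyG (deg x') cx'z ex'z nzz.
case: (eqVneq x z) => [xz|xz].
  have := hbeta x; rewrite /beta => /eqP/cards1P[s hs].
  have h1 : x' \in [set u | (u != x) && (common e u x == k - 1)].
    rewrite inE xz cx'z eqxx andbT; apply/negP=> /eqP ex.
    by rewrite ex irr' in ex'z.
  have h2 : y \in [set u | (u != x) && (common e u x == k - 1)].
    by rewrite inE yx commonC // cxy eqxx.
  move: h1 h2; rewrite hs !inE => /eqP h1s /eqP ys.
  by move: nax; rewrite ys -h1s exx'.
have ezx : e z x.
  apply: HL; first by rewrite sym.
  exact: xz.
have yx' : y != x'.
  by apply/negP=> /eqP yx'; move: nax; rewrite yx' exx'.
have zx'' : z != x'.
  by apply/negP=> /eqP zx''; move: ex'z; rewrite zx'' irr'.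
have nyx' : ~~ e y x' by rewrite sym.
have exz : e x z by rewrite sym.
have eyz : e y z := keyG (deg x) cxy exx' nyx' exz zx''.
have cz : common e z x' = k - 1 by rewrite commonC.
have nx'x' : ~~ e x' x' by rewrite irr'.
have ezy : e z y by rewrite sym.
have ezx' : e z x' by rewrite sym.
have := keyG (deg z) cz ezx' nx'x' ezy yx'.
by rewrite (negbTE nex'y).
Qed.
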